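(* Suppose Assumptions 1 and 4 hold, and let $d^*=\max_iL_{ii}$ be the maximal degree of $\mathcal G$. Then $\bar{\mathfrak A}$ is maximally monotone, and $\bar{\mathfrak B}$ is $\beta_E$-cocoercive for every $\beta_E\in\big(0,\tfrac12\min\{\bar\chi,\tfrac1{2d^*}\}\big)$.
   Context: Game: players $i=1,\dots,N$, $x_i\in\Omega_i\subseteq\mathbb R^{n_i}$, $n=\sum n_i$, $\Omega=\prod\Omega_i$, costs $f_i(x_i,x_{-i})$ defined and $C^1$ in $x_i$ on $\mathbb R^n$, data $A_i\in\mathbb R^{m\times n_i}$, $b_i\in\mathbb R^m$, $X=\Omega\cap\{\sum A_ix_i=\sum b_i\}$. Assumption 1: each $\Omega_i$ closed convex with nonempty interior; $X$ and each $\{x_i\in\Omega_i:(x_i,x_{-i})\in X\}$ have nonempty relative interior; $f_i$ convex in $x_i$. Graph: connected undirected graph, $N$ nodes, $M$ arbitrarily oriented edges, incidence $V$ ($V_{il}=1$ if $e_l$ points to $i$, $-1$ if starts at $i$, $0$ else), $L=VV^T$; $\mathbf V=V\otimes I_m$, $\mathbf L=L\otimes I_n$, $\mathbf A=\mathrm{diag}(A_i)$, $\mathbf b=\mathrm{col}(b_i)$. $\mathbf x=\mathrm{col}(x^{(1)},\dots,x^{(N)})\in\mathbb R^{Nn}$; $\mathcal R_i=[0_{n_i\times n_{<i}}\ I_{n_i}\ 0_{n_i\times n_{>i}}]$, $\mathcal R=\mathrm{diag}(\mathcal R_1,\dots,\mathcal R_N)$; $\mathbf F(\mathbf x)=\mathrm{col}(\nabla_{x_i}f_i(x^{(i)}))_i$.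 Assumption 4: for all $\mathbf x,\mathbf x'\in\mathbb R^{Nn}$, $\langle\mathbf x-\mathbf x',\mathcal R^T\mathbf F(\mathbf x)-\mathcal R^T\mathbf F(\mathbf x')\rangle\ge\bar\chi\|\mathbf F(\mathbf x)-\mathbf F(\mathbf x')\|^2$ with $\bar\chi>0$. $\bar{\mathfrak A}(\mathbf W)=\mathrm{col}(-\mathbf V\mathbf z-\mathbf A\mathcal R\mathbf x,\ \mathbf V^T\Lambda,\ \mathcal R^TN_\Omega(\mathcal R\mathbf x)+\mathcal R^T\mathbf A^T\Lambda)$, $\bar{\mathfrak B}(\mathbf W)=\mathrm{col}(\mathbf b,\mathbf 0,\mathcal R^T\mathbf F(\mathbf x)+\mathbf L\mathbf x)$ for $\mathbf W=\mathrm{col}(\Lambda,\mathbf z,\mathbf x)\in\mathbb R^{Nm}\times\mathbb R^{Mm}\times\mathbb R^{Nn}$. $\beta$-cocoercive means $\langle u-v,Su-Sv\rangle\ge\beta\|Su-Sv\|^2$. *)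

(* Defs.v *)
(* A vector in R^k is a function T -> R on a
   finite index type T with #|T| = k. *)
From mathcomp Require Import all_boot.
From Stdlib Require Import Reals.


Unset Printing Implicit Defensive.
Local Open Scope R_scope.

Definition vsum {T : finType} (u : T -> R) : R := \big[Rplus/0]_(t : T) u t.
Definition dot {T : finType} (u v : T -> R) : R := vsum (fun t => u t * v t).
Definition nsq {T : finType} (u : T -> R) : R := dot u u.
Definition vadd {T : Type} (u v : T -> R) : T -> R := fun t => u t + v t.
Definition vsub {T : Type} (u v : T -> R) : T -> R := fun t => u t - v t.
Definition vopp {T : Type} (u : T -> R) : T -> R := fun t => - u t.
Definition vzero {T : Type} : T -> R := fun _ => 0.

Definition is_closed {T : finType} (S : (T -> R) -> Prop) : Prop :=
  forall (u : nat -> T -> R) (l : T -> R),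
    (forall k, S (u k)) -> (forall c, Un_cv (fun k => u k c) (l c)) -> S l.
Definition is_convex {T : finType} (S : (T -> R) -> Prop) : Prop :=
  forall x y t, 0 <= t <= 1 -> S x -> S y ->
    S (fun c => t * x c + (1 - t) * y c).
Definition has_nonempty_interior {T : finType} (S : (T -> R) -> Prop) : Prop :=
  exists x eps, 0 < eps /\
    forall y, (forall c, Rabs (y c - x c) < eps) -> S y.
Definition aff_hull {T : finType} (S : (T -> R) -> Prop) (y : T -> R) : Prop :=
  exists (k : nat) (p : 'I_k -> T -> R) (w : 'I_k -> R),
    (forall j, S (p j)) /\ vsum w = 1 /\
    forall c, y c = vsum (fun j => w j * p j c).
Definition rel_interior {T : finType} (S : (T -> R) -> Prop) (x : T -> R) : Prop :=
  S x /\ exists eps, 0 < eps /\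
    forall y, aff_hull S y -> (forall c, Rabs (y c - x c) < eps) -> S y.
Definition has_nonempty_rel_interior {T : finType} (S : (T -> R) -> Prop) : Prop :=
  exists x, rel_interior S x.
Definition continuous_at {T : finType} (h : (T -> R) -> R) (y : T -> R) : Prop :=
  forall eps, 0 < eps -> exists del, 0 < del /\
    forall y', (forall c, Rabs (y' c - y c) < del) -> Rabs (h y' - h y) < eps.
Definition normal_cone {T : finType} (S : (T -> R) -> Prop) (y v : T -> R) : Prop :=
  S y /\ forall z, S z -> dot v (vsub z y) <= 0.

(* global decision coordinates: pairs (player i, coordinate k < n_i);
   R^n with n = sum_i n_i is  Idx ns -> R *)
Definition Idx (N : nat) (ns : 'I_N -> nat) : finType := {i : 'I_N & 'I_(ns i)}.

Section Game.
Variables (N M m : nat) (ns : 'I_N -> nat).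
Local Notation Idx := (@Idx N ns).

Definition block (x : Idx -> R) (i : 'I_N) : 'I_(ns i) -> R :=
  fun k => x (Tagged (fun j => 'I_(ns j)) k).
Definition setblock (x : Idx -> R) (i : 'I_N) (y : 'I_(ns i) -> R) : Idx -> R :=
  fun p => @untag _ (fun j => 'I_(ns j)) _ (x p) i y p.
Definition upd (x : Idx -> R) (p0 : Idx) (t : R) : Idx -> R :=
  fun p => if p == p0 then t else x p.

Variables (Om : forall i : 'I_N, ('I_(ns i) -> R) -> Prop)
          (A : forall i : 'I_N, 'I_m -> 'I_(ns i) -> R)
          (b : 'I_N -> 'I_m -> R).

Definition Omega (x : Idx -> R) : Prop := forall i, Om i (block x i).
Definition feasible (x : Idx -> R) : Prop :=
  Omega x /\ forall r : 'I_m,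
    vsum (fun i => vsum (fun k : 'I_(ns i) => A i r k * block x i k))
    = vsum (fun i => b i r).
Definition player_feasible (x : Idx -> R) (i : 'I_N) (y : 'I_(ns i) -> R) : Prop :=
  Om i y /\ feasible (setblock x i y).

Definition is_partial_gradient_C1 (f : 'I_N -> (Idx -> R) -> R)
    (g : forall i : 'I_N, (Idx -> R) -> 'I_(ns i) -> R) : Prop :=
  (forall i x (k : 'I_(ns i)),
     derivable_pt_lim (fun t => f i (upd x (Tagged (fun j => 'I_(ns j)) k) t))
                      (x (Tagged (fun j => 'I_(ns j)) k)) (g i x k)) /\
  (forall i x (k : 'I_(ns i)) y,
     continuous_at (fun y' => g i (setblock x i y') k) y).

Definition Assumption1 (f : 'I_N -> (Idx -> R) -> R) : Prop :=
  (forall i, is_closed (@Om i) /\ is_convex (@Om i) /\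
             has_nonempty_interior (@Om i)) /\
  has_nonempty_rel_interior feasible /\
  (forall x i, feasible x -> has_nonempty_rel_interior (player_feasible x i)) /\
  (forall i x y1 y2 t, 0 <= t <= 1 ->
     f i (setblock x i (fun c => t * y1 c + (1 - t) * y2 c))
     <= t * f i (setblock x i y1) + (1 - t) * f i (setblock x i y2)).

Variables (src dst : 'I_M -> 'I_N).
Definition adj : rel 'I_N :=
  fun i j => [exists l, ((src l == i) && (dst l == j)) || ((src l == j) && (dst l == i))].
Definition simple_connected_graph : Prop :=
  (forall l, src l <> dst l) /\
  (forall l l', (src l = src l' /\ dst l = dst l') \/ (src l = dst l' /\ dst l = src l')
                -> l = l') /\
  (forall i j, connect adj i j).
Definition Vinc (i : 'I_N) (l : 'I_M) : R :=
  if dst l == i then 1 else if src l == i then -1 else 0.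
Definition Lap (i j : 'I_N) : R := vsum (fun l => Vinc i l * Vinc j l).
Definition dstar : R := \big[Rmax/0]_(i : 'I_N) Lap i i.

Definition Lam := 'I_N -> 'I_m -> R.
Definition Zv := 'I_M -> 'I_m -> R.
Definition XX := 'I_N -> Idx -> R.          (* R^{Nn}, x = col(x^(1..N)) *)
Definition Wsp : Type := (Lam * Zv * XX)%type.

Definition dot2 {T1 T2 : finType} (u v : T1 -> T2 -> R) : R :=
  vsum (fun a => dot (u a) (v a)).
Definition dotW (w w' : Wsp) : R :=
  let '(l, z, x) := w in let '(l', z', x') := w' in
  dot2 l l' + dot2 z z' + dot2 x x'.
Definition subW (w w' : Wsp) : Wsp :=
  let '(l, z, x) := w in let '(l', z', x') := w' in
  (fun a c => l a c - l' a c, fun a c => z a c - z' a c, fun a c => x a c - x' a c).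

Definition bV (z : Zv) : Lam := fun i r => vsum (fun l => Vinc i l * z l r).
Definition bVt (lam : Lam) : Zv := fun l r => vsum (fun i => Vinc i l * lam i r).
Definition bL (x : XX) : XX := fun i p => vsum (fun j => Lap i j * x j p).
Definition Rop (x : XX) : Idx -> R := fun p => x (tag p) p.
Definition Rt (y : Idx -> R) : XX := fun j p => if tag p == j then y p else 0.
Definition bA (y : Idx -> R) : Lam :=
  fun i r => vsum (fun k : 'I_(ns i) => A i r k * block y i k).
Definition bAt (lam : Lam) : Idx -> R :=
  fun p => vsum (fun r => A (tag p) r (tagged p) * lam (tag p) r).
Definition bb : Lam := b.

Variable (g : forall i : 'I_N, (Idx -> R) -> 'I_(ns i) -> R).
Definition Fop (x : XX) : Idx -> R := fun p => g (tag p) (x (tag p)) (tagged p).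

Definition Assumption4 (chi : R) : Prop :=
  forall x x' : XX,
    dot2 (fun i p => x i p - x' i p) (fun i p => Rt (Fop x) i p - Rt (Fop x') i p)
    >= chi * nsq (vsub (Fop x) (Fop x')).

Definition Abar (w u : Wsp) : Prop :=
  let '(lam, z, x) := w in let '(u1, u2, u3) := u in
  u1 = (fun i r => - bV z i r - bA (Rop x) i r) /\
  u2 = bVt lam /\
  exists v, normal_cone Omega (Rop x) v /\
            u3 = (fun i p => Rt v i p + Rt (bAt lam) i p).

Definition Bbar (w : Wsp) : Wsp :=
  let '(lam, z, x) := w in
  (bb, (fun _ _ => 0), (fun i p => Rt (Fop x) i p + bL x i p)).
End Game.

Definition monotone {W : Type} (ip : W -> W -> R) (sub : W -> W -> W)
  (T : W -> W -> Prop) : Prop :=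
  forall w w' u u', T w u -> T w' u' -> 0 <= ip (sub w w') (sub u u').
Definition maximally_monotone {W : Type} (ip : W -> W -> R) (sub : W -> W -> W)
  (T : W -> W -> Prop) : Prop :=
  monotone ip sub T /\
  forall T' : W -> W -> Prop, monotone ip sub T' ->
    (forall w u, T w u -> T' w u) -> forall w u, T' w u -> T w u.
Definition cocoercive {W : Type} (ip : W -> W -> R) (sub : W -> W -> W)
  (beta : R) (S : W -> W) : Prop :=
  forall w w', ip (sub w w') (sub (S w) (S w'))
               >= beta * ip (sub (S w) (S w')) (sub (S w) (S w')).

(* 1/2 min{chi, 1/(2 dstar)}, with 1/(2 dstar) = +infinity when dstar = 0 *)
Definition beta_bound (chi ds : R) : R :=
  / 2 * (if Req_EM_T ds 0 then chi else Rmin chi (/ (2 * ds))).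

(* Main.v *)
Require Import Defs.
From HB Require Import structures.
From mathcomp Require Import all_boot.
From Stdlib Require Import Reals Lra Classical ClassicalEpsilon FunctionalExtensionality.
Local Open Scope R_scope.
HB.instance Definition _ := Monoid.isComLaw.Build R 0 Rplus (fun a b c => esym (Rplus_assoc a b c)) Rplus_comm Rplus_0_l.

Section V.
Context {T : finType}.
Implicit Types u v : T -> R.
Lemma vsum_ext u v : (forall t, u t = v t) -> vsum u = vsum v.
Proof. by move=> H; apply: eq_bigr => t _. Qed.
Lemma vsumD u v : vsum (fun t => u t + v t) = vsum u + vsum v.
Proof. by rewrite /vsum big_split. Qed.
Lemma vsumZ c u : vsum (fun t => c * u t) = c * vsum u.
Proof. rewrite /vsum; elim/big_rec2: _ => [|i y1 y2 _ ->]; ring. Qed.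
Lemma vsumN u : vsum (fun t => - u t) = - vsum u.
Proof. rewrite /vsum; elim/big_rec2: _ => [|i y1 y2 _ ->]; ring. Qed.
Lemma vsumB u v : vsum (fun t => u t - v t) = vsum u - vsum v.
Proof. rewrite /Rminus -vsumN -vsumD //. Qed.
Lemma vsum0 : vsum (fun _ : T => 0) = 0.
Proof. rewrite /vsum big1 //. Qed.
Lemma vsum_ge0 u : (forall t, 0 <= u t) -> 0 <= vsum u.
Proof. move=> H; rewrite /vsum; apply: big_ind => //; [lra| move=> *; lra]. Qed.
Lemma vsum_le u v : (forall t, u t <= v t) -> vsum u <= vsum v.
Proof. move=> H; rewrite /vsum; apply: big_ind2 => //; [lra| move=> *; lra]. Qed.
Lemma vsum_term u t0 : (forall t, 0 <= u t) -> u t0 <= vsum u.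
Proof.
move=> H; rewrite /vsum (bigD1 t0) //=.
have : 0 <= \big[Rplus/0]_(i | i != t0) u i by apply: big_ind => //; [lra| move=> *; lra].
lra.
Qed.
Lemma vsum_delta (a : T -> R) i : vsum (fun j => if i == j then a j else 0) = a i.
Proof.
rewrite /vsum (bigD1 i) //= eqxx big1 ?Rplus_0_r // => j /negbTE; rewrite eq_sym => ->//.
Qed.
Lemma vsum_delta' (a : T -> R) i : vsum (fun j => if j == i then a j else 0) = a i.
Proof. rewrite -(vsum_delta a i); apply: vsum_ext => j; by rewrite eq_sym. Qed.
Lemma dotC u v : dot u v = dot v u.
Proof. apply: vsum_ext => t; ring. Qed.
Lemma nsq_ge0 u : 0 <= nsq u.
Proof. apply: vsum_ge0 => t; nra. Qed.
Lemma nsq_eq0 u : nsq u = 0 -> forall t, u t = 0.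
Proof.
move=> H t; have := @vsum_term (fun t => u t * u t) t (fun t => ltac:(nra)).
rewrite -/(dot u u) -/(nsq u) H; nra.
Qed.
End V.

Lemma vsum_exch (T1 T2 : finType) (F : T1 -> T2 -> R) :
  vsum (fun a => vsum (fun b => F a b)) = vsum (fun b => vsum (fun a => F a b)).
Proof. rewrite /vsum; exact: exchange_big. Qed.

Lemma vsum_sig (I : finType) (J : I -> finType) (h : {i : I & J i} -> R) :
  vsum h = vsum (fun i => vsum (fun k : J i => h (Tagged J k))).
Proof.
rewrite /vsum (sig_big_dep xpredT (fun i => xpredT) (fun i k => h (Tagged J k))) /=.
by apply: eq_bigr => -[i k].
Qed.

Lemma vsum_cv_seq (T : Type) (s : seq T) (a : nat -> T -> R) (l : T -> R) :
  (forall t, Un_cv (fun k => a k t) (l t)) ->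
  Un_cv (fun k => \big[Rplus/0]_(t <- s) a k t) (\big[Rplus/0]_(t <- s) l t).
Proof.
move=> H; elim: s => [|x s IH].
  rewrite big_nil; apply: (Un_cv_ext (fun _ => 0)); first by move=> n; rewrite big_nil.
  by move=> e He; exists 0%nat => n _; rewrite /Rdist Rminus_0_r Rabs_R0.
rewrite big_cons; apply: (Un_cv_ext (fun k => a k x + \big[Rplus/0]_(t <- s) a k t)).
  by move=> n; rewrite big_cons.
exact: CV_plus.
Qed.

Lemma vsum_cv (T : finType) (a : nat -> T -> R) (l : T -> R) :
  (forall t, Un_cv (fun k => a k t) (l t)) ->
  Un_cv (fun k => vsum (a k)) (vsum l).
Proof. exact: vsum_cv_seq. Qed.

Section D2.
Context {T1 T2 : finType}.
Implicit Types a b c : T1 -> T2 -> R.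
Lemma dot2_ext a b c : (forall i r, b i r = c i r) -> dot2 a b = dot2 a c.
Proof. move=> H; apply: vsum_ext => i; apply: vsum_ext => r; by rewrite H. Qed.
Lemma dot2D a b c : dot2 a (fun i r => b i r + c i r) = dot2 a b + dot2 a c.
Proof.
rewrite /dot2 -vsumD; apply: vsum_ext => i; rewrite /dot -vsumD; apply: vsum_ext => r; ring.
Qed.
Lemma dot2B a b c : dot2 a (fun i r => b i r - c i r) = dot2 a b - dot2 a c.
Proof.
rewrite /dot2 -vsumB; apply: vsum_ext => i; rewrite /dot -vsumB; apply: vsum_ext => r; ring.
Qed.
Lemma dot2N a b : dot2 a (fun i r => - b i r) = - dot2 a b.
Proof.
rewrite /dot2 -vsumN; apply: vsum_ext => i; rewrite /dot -vsumN; apply: vsum_ext => r; ring.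
Qed.
Lemma dot2C a b : dot2 a b = dot2 b a.
Proof. apply: vsum_ext => i; exact: dotC. Qed.
Lemma dot2_0 a : dot2 a (fun _ _ => 0) = 0.
Proof.
transitivity (vsum (fun _ : T1 => 0)); last exact: vsum0.
apply: vsum_ext => i; transitivity (vsum (fun _ : T2 => 0)); last exact: vsum0.
apply: vsum_ext => r; ring.
Qed.
Lemma dot2_ge0 a : 0 <= dot2 a a.
Proof. apply: vsum_ge0 => i; exact: nsq_ge0. Qed.
Lemma dot2_eq0 a : dot2 a a = 0 -> forall i r, a i r = 0.
Proof.
move=> H i; apply: nsq_eq0.
have := @vsum_term _ (fun i => nsq (a i)) i (fun i => nsq_ge0 _).
have -> : vsum (fun i => nsq (a i)) = dot2 a a by [].
rewrite H => H1; have := nsq_ge0 (a i); lra.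
Qed.
End D2.

Lemma arch_inv eps : 0 < eps -> exists K : nat, forall k : nat, (K <= k)%coq_nat -> / (INR k + 1) < eps.
Proof.
move=> He; have [N [HN HN0]] := archimed_cor1 eps He.
exists N => k Hk.
have H1 : INR N <= INR k by apply: le_INR.
have H0 : 0 < INR N by apply: lt_0_INR.
apply: Rle_lt_trans HN; apply: Rinv_le_contravar => //; lra.
Qed.

Section Proj.
Variable T : finType.
Variable S : (T -> R) -> Prop.
Hypothesis Scl : is_closed S.
Hypothesis Scv : is_convex S.
Variable z0 : T -> R.
Hypothesis Sz0 : S z0.
Variable y : T -> R.

Let d2 z := nsq (vsub y z).

Lemma d2_ge0 z : 0 <= d2 z. Proof. exact: nsq_ge0. Qed.

Lemma inf_exists : exists delta, (forall z, S z -> delta <= d2 z) /\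
  forall eps, 0 < eps -> exists z, S z /\ d2 z < delta + eps.
Proof.
pose E r := exists z, S z /\ r = - d2 z.
have Eb : bound E by exists 0 => r [z [_ ->]]; have := d2_ge0 z; lra.
have [m [Hub Hlub]] := completeness E Eb (ex_intro _ (- d2 z0) (ex_intro _ z0 (conj Sz0 erefl))).
exists (- m); split.
  by move=> z Sz; have := Hub (- d2 z) (ex_intro _ z (conj Sz erefl)); lra.
move=> eps He; apply: NNPP => Hn.
have : m <= m - eps; last lra.
apply: Hlub => r [z [Sz ->]].
have : ~ (S z /\ d2 z < - m + eps) by move=> H; apply: Hn; exists z.
move=> H; apply: Rnot_lt_le => Hlt; apply: H; split => //; lra.
Qed.

Lemma parallelogram a b delta : (forall z, S z -> delta <= d2 z) -> S a -> S b ->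
  nsq (vsub a b) <= 2 * d2 a + 2 * d2 b - 4 * delta.
Proof.
move=> Hd Sa Sb.
have Sc := Scv a b (/2) ltac:(lra) Sa Sb.
have := Hd _ Sc.
have -> : nsq (vsub a b) = 2 * d2 a + 2 * d2 b - 4 * d2 (fun c => / 2 * a c + (1 - / 2) * b c); last lra.
rewrite /d2 /nsq /dot /vsub -!vsumZ -vsumD -vsumB; apply: vsum_ext => t; field.
Qed.

Lemma projection : exists p, S p /\ forall z, S z -> dot (vsub y p) (vsub z p) <= 0.
Proof.
have [delta [Hd Hinf]] := inf_exists.
have Hk : forall k : nat, exists z, S z /\ d2 z < delta + / (INR k + 1).
  move=> k; apply: Hinf; apply: Rinv_0_lt_compat; have := pos_INR k; lra.
pose zs k := proj1_sig (constructive_indefinite_description _ (Hk k)).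
have Szs k : S (zs k) by rewrite /zs; case: constructive_indefinite_description => z [].
have d2zs k : d2 (zs k) < delta + / (INR k + 1)
  by rewrite /zs; case: constructive_indefinite_description => z [].
have Hcau : forall c, Cauchy_crit (fun k => zs k c).
  move=> c eps He.
  have [K HK] := arch_inv (eps * eps / 4) ltac:(nra).
  exists K => j k Hj Hk'.
  have Hp := parallelogram (zs j) (zs k) delta Hd (Szs j) (Szs k).
  have Ht := @vsum_term _ (fun t => vsub (zs j) (zs k) t * vsub (zs j) (zs k) t) c (fun t => ltac:(nra)).
  rewrite -/(dot _ _) -/(nsq _) in Ht.
  have := d2zs j; have := d2zs k; have := HK j Hj; have := HK k Hk'.
  move=> H1 H2 H3 H4.
  have Hsq : Rsqr (vsub (zs j) (zs k) c) < Rsqr eps by rewrite /Rsqr; nra.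
  have := Rsqr_lt_abs_0 _ _ Hsq; rewrite /Rdist /vsub (Rabs_pos_eq eps); lra.
pose l c := proj1_sig (R_complete _ (Hcau c)).
have Hl c : Un_cv (fun k => zs k c) (l c) by rewrite /l; case: R_complete.
have Sl : S l := Scl zs l Szs Hl.
have Hcv : Un_cv (fun k => d2 (zs k)) (d2 l).
  apply: vsum_cv => t; rewrite /vsub.
  have Hy : Un_cv (fun _ : nat => y t) (y t) by move=> e He; exists 0%nat => n _; rewrite /Rdist Rminus_eq_0 Rabs_R0.
  have Hm := CV_minus _ _ _ _ Hy (Hl t).
  exact: (CV_mult _ _ _ _ Hm Hm).
have Hmin : forall z, S z -> d2 l <= d2 z.
  move=> z Sz; apply: Rnot_lt_le => Hlt.
  pose eps := (d2 l - d2 z) / 2.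
  have [K1 HK1] := Hcv eps ltac:(rewrite /eps; lra).
  have [K2 HK2] := arch_inv eps ltac:(rewrite /eps; lra).
  have := HK1 (Nat.max K1 K2) (Nat.le_max_l _ _).
  have := HK2 (Nat.max K1 K2) (Nat.le_max_r _ _).
  have := d2zs (Nat.max K1 K2); have := Hd z Sz.
  rewrite /Rdist => H1 H2 H3 H4.
  case: (Rabs_def2 _ _ H4); move=> H5 H6; unfold eps in *; lra.
exists l; split => // z Sz; apply: Rnot_lt_le => Hpos.
set a := dot (vsub y l) (vsub z l) in Hpos.
set B := nsq (vsub z l).
have HB : 0 <= B by apply: nsq_ge0.
pose t := a / (a + B + 1).
have Ht0 : 0 < t by rewrite /t; apply: Rdiv_lt_0_compat; lra.
have Et : t * (a + B + 1) = a by rewrite /t; field; lra.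
have Ht1 : t <= 1 by nra.
have := Hmin _ (Scv z l t ltac:(lra) Sz Sl).
have -> : d2 (fun c => t * z c + (1 - t) * l c) = d2 l - 2 * t * a + t * t * B.
  rewrite /d2 /a /B /nsq /dot /vsub -!vsumZ -vsumB -vsumD; apply: vsum_ext => c; ring.
move=> H.
nra.
Qed.
End Proj.

Lemma nc_max (T : finType) (S : (T -> R) -> Prop) : is_closed S -> is_convex S ->
  (exists z0, S z0) -> forall y q : T -> R,
  (forall y' v', normal_cone S y' v' -> 0 <= dot (vsub y y') (vsub q v')) ->
  normal_cone S y q.
Proof.
move=> Scl Scv [z0 Sz0] y q H.
have [p [Sp Hp]] := projection T S Scl Scv z0 Sz0 (vadd y q).
have Hn : normal_cone S p (vsub (vadd y q) p) by split.
have := H _ _ Hn.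
have -> : dot (vsub y p) (vsub q (vsub (vadd y q) p)) = - nsq (vsub y p).
  rewrite /nsq /dot -vsumN; apply: vsum_ext => t; rewrite /vsub /vadd; ring.
move=> H1; have H0 : nsq (vsub y p) = 0 by have := nsq_ge0 (vsub y p); lra.
have Eyp : y = p.
  apply: functional_extensionality => t; have := nsq_eq0 _ H0 t; rewrite /vsub; lra.
subst p; split => // z Sz.
have := Hp z Sz; rewrite /dot; congr (_ <= _); apply: vsum_ext => t; rewrite /vsub /vadd; ring.
Qed.

Section G.
Variables (N M m : nat) (ns : 'I_N -> nat) (src dst : 'I_M -> 'I_N)
  (A : forall i : 'I_N, 'I_m -> 'I_(ns i) -> R).

Lemma dot2_Rt (x : XX N ns) y : dot2 x (Rt N ns y) = dot (Rop N ns x) y.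
Proof.
rewrite /dot2 /dot vsum_exch; apply: vsum_ext => p.
rewrite -(vsum_delta (fun j => x j p * y p) (tag p)); apply: vsum_ext => j.
rewrite /Rt; case: eqP => _; ring.
Qed.

Lemma bA_adj (lam : Lam N m) y : dot2 lam (bA N m ns A y) = dot y (bAt N m ns A lam).
Proof.
rewrite /dot2 /dot.
rewrite (@vsum_sig 'I_N (fun i => 'I_(ns i)) (fun p => y p * bAt N m ns A lam p)).
apply: vsum_ext => i; rewrite /bA /bAt /block /=.
transitivity (vsum (fun r => vsum (fun k : 'I_(ns i) => lam i r * A i r k * y (Tagged (fun j => 'I_(ns j)) k)))).
  apply: vsum_ext => r; rewrite -vsumZ; apply: vsum_ext => k; ring.
rewrite vsum_exch; apply: vsum_ext => k; rewrite -vsumZ; apply: vsum_ext => r; ring.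
Qed.

Lemma bV_adj (lam : Lam N m) (z : Zv M m) : dot2 lam (bV N M m src dst z) = dot2 z (bVt N M m src dst lam).
Proof.
rewrite /dot2 /dot /bV /bVt.
transitivity (vsum (fun i => vsum (fun r => vsum (fun l => lam i r * Vinc N M src dst i l * z l r)))).
  apply: vsum_ext => i; apply: vsum_ext => r; rewrite -vsumZ; apply: vsum_ext => l; ring.
transitivity (vsum (fun i => vsum (fun l => vsum (fun r => lam i r * Vinc N M src dst i l * z l r)))).
  by apply: vsum_ext => i; rewrite vsum_exch.
rewrite vsum_exch.
transitivity (vsum (fun l => vsum (fun r => vsum (fun i => lam i r * Vinc N M src dst i l * z l r)))).
  by apply: vsum_ext => l; rewrite vsum_exch.
apply: vsum_ext => l; apply: vsum_ext => r; rewrite -vsumZ; apply: vsum_ext => i; ring.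
Qed.

Local Notation XX := (XX N ns).
Local Notation Lam := (Lam N m).
Local Notation Zv := (Zv M m).
Local Notation bV := (bV N M m src dst).
Local Notation bVt := (bVt N M m src dst).
Local Notation bA := (bA N m ns A).
Local Notation bAt := (bAt N m ns A).
Local Notation Rop := (Rop N ns).
Local Notation Rt := (Rt N ns).

Lemma bV_lin (z z' : Zv) i r : bV (fun l r => z l r - z' l r) i r = bV z i r - bV z' i r.
Proof. rewrite /Defs.bV -vsumB; apply: vsum_ext => l; ring. Qed.
Lemma bVt_lin (a a' : Lam) l r : bVt (fun l r => a l r - a' l r) l r = bVt a l r - bVt a' l r.
Proof. rewrite /Defs.bVt -vsumB; apply: vsum_ext => i; ring. Qed.
Lemma bA_lin (y y' : Idx N ns -> R) i r : bA (fun p => y p - y' p) i r = bA y i r - bA y' i r.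
Proof. rewrite /Defs.bA -vsumB; apply: vsum_ext => k; rewrite /block; ring. Qed.
Lemma bAt_lin (a a' : Lam) p : bAt (fun l r => a l r - a' l r) p = bAt a p - bAt a' p.
Proof. rewrite /Defs.bAt -vsumB; apply: vsum_ext => r; ring. Qed.
Lemma Rt_lin (y y' : Idx N ns -> R) i p : Rt (fun p => y p - y' p) i p = Rt y i p - Rt y' i p.
Proof. rewrite /Defs.Rt; case: eqP => _; ring. Qed.

Lemma key_eq (lam lam' : Lam) (z z' : Zv) (x x' : XX) (u1 : Lam) (u2 : Zv) (u3 : XX) (v' : Idx N ns -> R) :
 dotW N M m ns (subW N M m ns (lam, z, x) (lam', z', x'))
   (subW N M m ns (u1, u2, u3) ((fun i r => - bV z' i r - bA (Rop x') i r), bVt lam',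
       (fun i p => Rt v' i p + Rt (bAt lam') i p)))
 = dot2 (fun i r => lam i r - lam' i r) (fun i r => u1 i r + bV z i r + bA (Rop x) i r)
 + dot2 (fun l r => z l r - z' l r) (fun l r => u2 l r - bVt lam l r)
 + dot2 (fun i p => x i p - x' i p) (fun i p => u3 i p - Rt (bAt lam) i p)
 - dot (Rop (fun i p => x i p - x' i p)) v'.
Proof.
rewrite /=.
set dl := (fun i r => lam i r - lam' i r).
set dz := (fun l r => z l r - z' l r).
set dx := (fun i p => x i p - x' i p).
rewrite (dot2_ext dl _ (fun i r => (u1 i r + bV z i r + bA (Rop x) i r - bV dz i r) - bA (Rop dx) i r)); last first.
  move=> i r; rewrite /dz /dx bV_lin.
  have -> : Rop (fun i p => x i p - x' i p) = (fun p => Rop x p - Rop x' p) by [].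
  rewrite bA_lin; ring.
rewrite (dot2_ext dz _ (fun l r => (u2 l r - bVt lam l r) + bVt dl l r)); last first.
  move=> l r; rewrite /dl bVt_lin; ring.
rewrite (dot2_ext dx _ (fun i p => (u3 i p - Rt (bAt lam) i p + Rt (bAt dl) i p) - Rt v' i p)); last first.
  move=> i p; rewrite /dl.
  have -> : bAt (fun l r => lam l r - lam' l r) = (fun p => bAt lam p - bAt lam' p).
    by apply: functional_extensionality => q; rewrite bAt_lin.
  rewrite Rt_lin; ring.
rewrite !dot2B !dot2D !dot2N !dot2_Rt !bV_adj !bA_adj.
ring.
Qed.
End G.

Lemma dot2_zero_l {T1 T2 : finType} (a b : T1 -> T2 -> R) : (forall i r, a i r = 0) -> dot2 a b = 0.
Proof. move=> H; rewrite dot2C -(dot2_0 b); apply: dot2_ext => i r; by rewrite H. Qed.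
Lemma dot_zero_r {T : finType} (a : T -> R) : dot a (fun _ => 0) = 0.
Proof. transitivity (vsum (fun _ : T => 0)); last exact: vsum0. apply: vsum_ext => t; ring. Qed.
Lemma dot2Z {T1 T2 : finType} (a b : T1 -> T2 -> R) c : dot2 a (fun i r => c * b i r) = c * dot2 a b.
Proof.
rewrite /dot2 -vsumZ; apply: vsum_ext => i; rewrite /dot -vsumZ; apply: vsum_ext => r; ring.
Qed.

Section Max.
Variables (N M m : nat) (ns : 'I_N -> nat) (src dst : 'I_M -> 'I_N)
  (Om : forall i : 'I_N, ('I_(ns i) -> R) -> Prop)
  (A : forall i : 'I_N, 'I_m -> 'I_(ns i) -> R).
Hypothesis Hcl : forall i, is_closed (@Om i).
Hypothesis Hcv : forall i, is_convex (@Om i).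
Hypothesis Hne : forall i, exists x, Om i x.

Local Notation XX := (XX N ns).
Local Notation Lam := (Lam N m).
Local Notation Zv := (Zv M m).
Local Notation bV := (bV N M m src dst).
Local Notation bVt := (bVt N M m src dst).
Local Notation bA := (bA N m ns A).
Local Notation bAt := (bAt N m ns A).
Local Notation Rop := (Rop N ns).
Local Notation Rt := (Rt N ns).
Local Notation Omega := (Omega N ns Om).

Lemma Omega_closed : is_closed Omega.
Proof.
move=> u l Hu Hl i.
apply: (Hcl i (fun k => block N ns (u k) i) (block N ns l i)) => [k|c]; first exact: Hu k i.
exact: Hl.
Qed.
Lemma Omega_convex : is_convex Omega.
Proof. move=> x y t Ht Hx Hy i; exact: (Hcv i _ _ t Ht (Hx i) (Hy i)). Qed.
Lemma Omega_ne : exists y0, Omega y0.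
Proof.
pose xs i := proj1_sig (constructive_indefinite_description _ (Hne i)).
exists (fun p => xs (tag p) (tagged p)) => i.
rewrite /block /=; rewrite /xs; case: constructive_indefinite_description => //.
Qed.

Lemma nc0 y : Omega y -> normal_cone Omega y (fun _ => 0).
Proof. move=> Hy; split => // z _; rewrite dotC dot_zero_r; lra. Qed.

Lemma Abar_monotone : monotone (dotW N M m ns) (subW N M m ns) (Abar N M m ns Om A src dst).
Proof.
move=> [[lam z] x] [[lam' z'] x'] [[u1 u2] u3] [[u1' u2'] u3']
  [E1 [E2 [v [Hv E3]]]] [E1' [E2' [v' [Hv' E3']]]].
subst u1' u2' u3'; rewrite key_eq; subst u1 u2 u3.
rewrite (dot2_ext _ _ (fun _ _ => 0)); last by move=> *; ring.
rewrite (dot2_ext _ (fun l r => bVt lam l r - bVt lam l r) (fun _ _ => 0)); last by move=> *; ring.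
rewrite (dot2_ext _ _ (Rt v)); last by move=> *; ring.
rewrite !dot2_0 dot2_Rt.
case: Hv => Hx Hv; case: Hv' => Hx' Hv'.
move: (Hv _ Hx') (Hv' _ Hx); rewrite /dot => H1 H2.
rewrite !Rplus_0_l -vsumB.
rewrite (vsum_ext _ (fun p => - (v p * vsub (Rop x') (Rop x) p) - v' p * vsub (Rop x) (Rop x') p)); last by move=> p; rewrite /vsub /Defs.Rop; ring.
rewrite vsumB vsumN; lra.
Qed.

Lemma Abar_maximal : maximally_monotone (dotW N M m ns) (subW N M m ns) (Abar N M m ns Om A src dst).
Proof.
split; first exact: Abar_monotone.
move=> T' HT' Hsub [[lam z] x] [[u1 u2] u3] Hw.
pose e1 := fun i r => u1 i r + bV z i r + bA (Rop x) i r.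
pose e2 := fun l r => u2 l r - bVt lam l r.
pose e3 := fun i p => u3 i p - Rt (bAt lam) i p.
have KEY : forall (lam' : Lam) (z' : Zv) (x' : XX) v', normal_cone Omega (Rop x') v' ->
  0 <= dot2 (fun i r => lam i r - lam' i r) e1 + dot2 (fun l r => z l r - z' l r) e2
     + dot2 (fun i p => x i p - x' i p) e3 - dot (Rop (fun i p => x i p - x' i p)) v'.
  move=> lam' z' x' v' Hv'.
  have Hab : Abar N M m ns Om A src dst (lam', z', x')
     ((fun i r => - bV z' i r - bA (Rop x') i r), bVt lam', (fun i p => Rt v' i p + Rt (bAt lam') i p)).
    by split => //; split => //; exists v'.
  have := HT' _ _ _ _ Hw (Hsub _ _ Hab).
  by rewrite key_eq.
have [y0 Hy0] := Omega_ne.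
pose off := fun i p => if tag p == i then 0 else e3 i p.
have Hoff : forall i p, off i p = 0.
  apply: dot2_eq0; apply: Rle_antisym; last exact: dot2_ge0.
  apply: Rnot_lt_le => Hq.
  pose C := dot2 e3 (fun i p => x i p - Rt y0 i p).
  pose s := (Rabs C + 1) / dot2 off off.
  have ERop : Rop (fun i p => Rt y0 i p + s * off i p) = y0.
    apply: functional_extensionality => p; rewrite /Defs.Rop /Defs.Rt /off eqxx; ring.
  have := KEY lam z (fun i p => Rt y0 i p + s * off i p) (fun _ => 0).
  rewrite ERop => /(_ (nc0 _ Hy0)).
  rewrite dot_zero_r (dot2_zero_l _ e1) ?(dot2_zero_l _ e2); try by move=> *; ring.
  rewrite dot2C (dot2_ext _ _ (fun i p => (x i p - Rt y0 i p) - s * off i p)); last by move=> *; ring.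
  rewrite dot2B dot2Z -/C.
  have -> : dot2 e3 off = dot2 off off.
    apply: vsum_ext => i; apply: vsum_ext => p; rewrite /off; case: eqP => _; ring.
  have -> : s * dot2 off off = Rabs C + 1 by rewrite /s; field; apply: Rgt_not_eq.
  have := Rle_abs C; lra.
have He3 : forall i p, e3 i p = Rt (Rop e3) i p.
  move=> i p; rewrite /Defs.Rt /Defs.Rop; case: eqP => [<-|/eqP ne] //.
  have := Hoff i p; rewrite /off; case: eqP => // e; by rewrite e eqxx in ne.
pose q := Rop e3.
have NCx : normal_cone Omega (Rop x) q.
  apply: (@nc_max (Idx N ns) Omega Omega_closed Omega_convex Omega_ne (Rop x) q) => y' v' Hv'.
  have ERop : Rop (Rt y') = y'.
    by apply: functional_extensionality => p; rewrite /Defs.Rop /Defs.Rt eqxx.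
  have := KEY lam z (Rt y') v'; rewrite ERop => /(_ Hv').
  rewrite (dot2_zero_l _ e1) ?(dot2_zero_l _ e2); try by move=> *; ring.
  rewrite (dot2_ext _ e3 (Rt q)) // dot2_Rt !Rplus_0_l /dot -vsumB.
  congr (_ <= _); apply: vsum_ext => p; rewrite /vsub /Defs.Rop /Defs.Rt eqxx; ring.
have := KEY (fun i r => lam i r + e1 i r) (fun l r => z l r + e2 l r) x (fun _ => 0) (nc0 _ NCx.1).
rewrite dot_zero_r (dot2_zero_l _ e3); last by move=> *; ring.
rewrite dot2C (dot2_ext _ _ (fun i r => - e1 i r)); last by move=> *; ring.
rewrite [dot2 _ e2]dot2C (dot2_ext _ _ (fun i r => - e2 i r)); last by move=> *; ring.
rewrite !dot2N => H.
have H1 := dot2_ge0 e1; have H2 := dot2_ge0 e2.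
have He1 := dot2_eq0 e1 ltac:(lra).
have He2 := dot2_eq0 e2 ltac:(lra).
split.
  apply: functional_extensionality => i; apply: functional_extensionality => r.
  have := He1 i r; rewrite /e1; lra.
split.
  apply: functional_extensionality => l; apply: functional_extensionality => r.
  have := He2 l r; rewrite /e2; lra.
exists q; split => //.
apply: functional_extensionality => i; apply: functional_extensionality => p.
have := He3 i p; rewrite /e3 -/q; lra.
Qed.
End Max.

Lemma cauchy_schwarz {T : finType} (a c : T -> R) : dot a c * dot a c <= nsq a * nsq c.
Proof.
have Hq : forall t, 0 <= t * t * nsq a - 2 * t * dot a c + nsq c.
  move=> t; have := nsq_ge0 (fun s => t * a s - c s).
  have -> : nsq (fun s => t * a s - c s) = t * t * nsq a - 2 * t * dot a c + nsq c; last by [].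
  rewrite /nsq /dot -!vsumZ -vsumB -vsumD; apply: vsum_ext => s; ring.
have HA := nsq_ge0 a; have HC := nsq_ge0 c.
case: (Rle_lt_or_eq_dec 0 (nsq a) HA) => HA'.
  have := Hq (dot a c / nsq a).
  have -> : dot a c / nsq a * (dot a c / nsq a) * nsq a - 2 * (dot a c / nsq a) * dot a c + nsq c
    = nsq c - dot a c * dot a c / nsq a by field; apply: Rgt_not_eq.
  move=> H.
  have : dot a c * dot a c / nsq a <= nsq c by lra.
  move=> H2; have := Rmult_le_compat_r (nsq a) _ _ HA H2.
  have -> : dot a c * dot a c / nsq a * nsq a = dot a c * dot a c by field; apply: Rgt_not_eq.
  lra.
have Ha := nsq_eq0 a (esym HA').
have -> : dot a c = 0.
  rewrite /dot -(@vsum0 T); apply: vsum_ext => s; rewrite Ha; ring.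
rewrite -HA'; lra.
Qed.

Section Lapl.
Variables (N M : nat) (src dst : 'I_M -> 'I_N).
Local Notation V := (Vinc N M src dst).
Local Notation Lap := (Lap N M src dst).
Local Notation ds := (dstar N M src dst).

Lemma V3 i l : V i l * V i l * V i l = V i l.
Proof. rewrite /Vinc; case: eqP => _; [|case: eqP => _]; ring. Qed.
Lemma V4 i l : V i l * V i l * (V i l * V i l) = V i l * V i l.
Proof. rewrite /Vinc; case: eqP => _; [|case: eqP => _]; ring. Qed.
Lemma Vcol l : vsum (fun i => V i l * V i l) <= 2.
Proof.
apply: Rle_trans (_ : vsum (fun i => (if dst l == i then 1 else 0) + (if src l == i then 1 else 0)) <= _).
  apply: vsum_le => i; rewrite /Vinc eq_sym; case: eqP => _; rewrite [src l == i]eq_sym; case: eqP => _; lra.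
rewrite vsumD (vsum_delta (fun _ => 1)) (vsum_delta (fun _ => 1)); lra.
Qed.

Lemma bigmax_seq (s : seq 'I_N) (F : 'I_N -> R) i : i \in s -> F i <= \big[Rmax/0]_(j <- s) F j.
Proof.
elim: s => [//|a s IH]; rewrite in_cons big_cons /= => /orP [/eqP ->|H].
  exact: Rmax_l.
apply: Rle_trans (IH H) _; exact: Rmax_r.
Qed.
Lemma Lap_le_ds i : Lap i i <= ds.
Proof. rewrite /dstar; apply: (bigmax_seq _ (fun i => Lap i i)); exact: mem_index_enum. Qed.
Lemma ds_ge0 : 0 <= ds.
Proof. rewrite /dstar; apply: big_ind => //; first lra. move=> x y Hx _; apply: Rle_trans Hx (Rmax_l _ _). move=> i _; apply: vsum_ge0 => l; nra. Qed.

Lemma lap_coord (xv : 'I_N -> R) :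
  let yv := fun l => vsum (fun j => V j l * xv j) in
  (forall i, vsum (fun j => Lap i j * xv j) = vsum (fun l => V i l * yv l)) /\
  vsum (fun i => xv i * vsum (fun j => Lap i j * xv j)) = vsum (fun l => yv l * yv l).
Proof.
move=> yv.
have H1 : forall i, vsum (fun j => Lap i j * xv j) = vsum (fun l => V i l * yv l).
  move=> i; rewrite /yv.
  transitivity (vsum (fun j => vsum (fun l => V i l * V j l * xv j))).
    apply: vsum_ext => j; rewrite /Defs.Lap Rmult_comm -vsumZ; apply: vsum_ext => l; ring.
  rewrite vsum_exch; apply: vsum_ext => l; rewrite -vsumZ; apply: vsum_ext => j; ring.
split => //.
transitivity (vsum (fun i => vsum (fun l => xv i * V i l * yv l))).
  apply: vsum_ext => i; rewrite H1 -vsumZ; apply: vsum_ext => l; ring.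
rewrite vsum_exch; apply: vsum_ext => l; rewrite /yv.
rewrite -vsumZ; apply: vsum_ext => i; ring.
Qed.

Lemma lap_bound (yv : 'I_M -> R) :
  vsum (fun i => vsum (fun l => V i l * yv l) * vsum (fun l => V i l * yv l))
  <= 2 * ds * vsum (fun l => yv l * yv l).
Proof.
apply: Rle_trans (_ : vsum (fun i => ds * vsum (fun l => V i l * V i l * (yv l * yv l))) <= _).
  apply: vsum_le => i.
  have E1 : vsum (fun l => V i l * yv l) = dot (V i) (fun l => V i l * V i l * yv l).
    apply: vsum_ext => l; have := V3 i l; move: (V i l) => v Hv; rewrite -{1}Hv; ring.
  have E2 : nsq (fun l => V i l * V i l * yv l) = vsum (fun l => V i l * V i l * (yv l * yv l)).
    apply: vsum_ext => l; have := V4 i l; move: (V i l) => v Hv; transitivity (v * v * (v * v) * (yv l * yv l)); [ring | rewrite Hv; ring].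
  rewrite E1; apply: Rle_trans (cauchy_schwarz _ _) _; rewrite E2.
  apply: Rmult_le_compat_r; first by apply: vsum_ge0 => l; nra.
  exact: Lap_le_ds.
rewrite vsumZ vsum_exch.
have : vsum (fun l => vsum (fun i => V i l * V i l * (yv l * yv l))) <= 2 * vsum (fun l => yv l * yv l).
  rewrite -vsumZ; apply: vsum_le => l.
  rewrite (vsum_ext _ (fun i => (yv l * yv l) * (V i l * V i l))); last by move=> i; ring.
  rewrite vsumZ; have := Vcol l; have : 0 <= yv l * yv l by nra.
  nra.
have := ds_ge0; nra.
Qed.
End Lapl.

Section Coco.
Variables (N M m : nat) (ns : 'I_N -> nat) (src dst : 'I_M -> 'I_N).
Local Notation bL := (bL N M ns src dst).
Local Notation ds := (dstar N M src dst).

Lemma dot2_bL (x : XX N ns) :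
  0 <= dot2 x (bL x) /\ dot2 (bL x) (bL x) <= 2 * ds * dot2 x (bL x).
Proof.
pose yv p := fun l => vsum (fun j => Vinc N M src dst j l * x j p).
have E : dot2 x (bL x) = vsum (fun p => vsum (fun l => yv p l * yv p l)).
  rewrite /dot2 /dot vsum_exch; apply: vsum_ext => p.
  exact: (lap_coord N M src dst (fun i => x i p)).2.
have E2 : dot2 (bL x) (bL x) = vsum (fun p => vsum (fun i =>
     vsum (fun l => Vinc N M src dst i l * yv p l) * vsum (fun l => Vinc N M src dst i l * yv p l))).
  rewrite /dot2 /dot vsum_exch; apply: vsum_ext => p; apply: vsum_ext => i.
  by rewrite /Defs.bL ((lap_coord N M src dst (fun i => x i p)).1 i).
split.
  rewrite E; apply: vsum_ge0 => p; apply: vsum_ge0 => l; nra.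
rewrite E2 E -vsumZ; apply: vsum_le => p; exact: lap_bound.
Qed.
End Coco.

Lemma dot2_sum_le {T1 T2 : finType} (a b : T1 -> T2 -> R) :
  dot2 (fun i r => a i r + b i r) (fun i r => a i r + b i r) <= 2 * dot2 a a + 2 * dot2 b b.
Proof.
apply: Rle_trans (_ : vsum (fun i => vsum (fun r => 2 * (a i r * a i r) + 2 * (b i r * b i r))) <= _).
  apply: vsum_le => i; apply: vsum_le => r; have H := Rle_0_sqr (a i r - b i r); rewrite /Rsqr in H; nra.
rewrite /dot2 /dot -!vsumZ -vsumD; apply: Req_le; apply: vsum_ext => i.
by rewrite -!vsumZ -vsumD.
Qed.

Lemma bL_lin N M ns src dst (x x' : XX N ns) i p :
  bL N M ns src dst (fun i p => x i p - x' i p) i p = bL N M ns src dst x i p - bL N M ns src dst x' i p.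
Proof. rewrite /Defs.bL -vsumB; apply: vsum_ext => j; ring. Qed.

Lemma Bbar_coco (N M m : nat) (ns : 'I_N -> nat) (src dst : 'I_M -> 'I_N) b
  (g : forall i : 'I_N, (Idx N ns -> R) -> 'I_(ns i) -> R) chi beta :
  0 < chi -> Assumption4 N ns g chi -> 0 < beta < beta_bound chi (dstar N M src dst) ->
  cocoercive (dotW N M m ns) (subW N M m ns) beta (Bbar N M m ns b src dst g).
Proof.
move=> Hchi HA4 [Hb0 Hb] [[lam z] x] [[lam' z'] x'] /=.
set dx := fun i p => x i p - x' i p.
set R := fun i p => Rt N ns (Fop N ns g x) i p - Rt N ns (Fop N ns g x') i p.
set L := bL N M ns src dst dx.
have ED : forall i p, Rt N ns (Fop N ns g x) i p + bL N M ns src dst x i p -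
     (Rt N ns (Fop N ns g x') i p + bL N M ns src dst x' i p) = R i p + L i p.
  by move=> i p; rewrite /R /L /dx bL_lin; ring.
rewrite (dot2_ext _ _ (fun i p => R i p + L i p)) //.
rewrite (dot2_ext (fun i p => _ - _) _ (fun i p => R i p + L i p)) //.
rewrite dot2C (dot2_ext _ _ (fun i p => R i p + L i p)) //.
rewrite (dot2_ext _ (fun i r => b i r - b i r) (fun _ _ => 0)); last by move=> *; ring.
rewrite (dot2_ext _ (fun i r => 0 - 0) (fun _ _ => 0)); last by move=> *; ring.
rewrite !dot2_0 (dot2_zero_l (fun i r => b i r - b i r)); last by move=> *; ring.
rewrite (dot2_zero_l (fun i r => 0 - 0)); last by move=> *; ring.
rewrite dot2D.
have HP := HA4 x x'. rewrite -/dx -/R in HP.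
have ERR : nsq (vsub (Fop N ns g x) (Fop N ns g x')) = dot2 R R.
  rewrite (dot2_ext R R (Rt N ns (vsub (Fop N ns g x) (Fop N ns g x')))); last first.
    by move=> i p; rewrite /R /vsub (Rt_lin N ns).
  rewrite dot2C (dot2_ext _ R (Rt N ns (vsub (Fop N ns g x) (Fop N ns g x')))); last first.
    by move=> i p; rewrite /R /vsub (Rt_lin N ns).
  rewrite dot2_Rt; apply: vsum_ext => p; rewrite /Defs.Rop /Defs.Rt eqxx //.
rewrite ERR in HP.
have [HQ HLL] := dot2_bL N M ns src dst dx.
rewrite -/L in HQ HLL.
have HDD := dot2_sum_le R L.
have HRR := dot2_ge0 R.
have Hds := ds_ge0 N M src dst.
have Hbeta : 2 * beta <= chi /\ 4 * beta * dstar N M src dst <= 1.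
  move: Hb; rewrite /beta_bound; case: Req_EM_T => [E | Hne] /= H; first by move: H => /= H; rewrite E; split; lra.
  have Hpos : 0 < dstar N M src dst by lra.
  have H1 := Rmin_l chi (/ (2 * dstar N M src dst)).
  have H2 := Rmin_r chi (/ (2 * dstar N M src dst)).
  split; first lra.
  have : 2 * beta * (2 * dstar N M src dst) <= / (2 * dstar N M src dst) * (2 * dstar N M src dst)
    by apply: Rmult_le_compat_r; lra.
  rewrite Rinv_l; lra.
case: Hbeta => Hb1 Hb2.
set P := dot2 dx R in HP *. set Q := dot2 dx L in HQ HLL *.
set RR := dot2 R R in HP HDD HRR *. set LL := dot2 L L in HLL HDD *.
set DD := dot2 _ _ in HDD *.
have H1 : beta * DD <= 2 * beta * RR + 2 * beta * LL by nra.
have H2 : 2 * beta * LL <= 4 * beta * dstar N M src dst * Q by nra.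
have H3 : 4 * beta * dstar N M src dst * Q <= Q by nra.
have H4 : 2 * beta * RR <= chi * RR by nra.
rewrite dot2C (dot2_ext (fun i p => R i p + L i p) _ (fun i p => R i p + L i p)) // -/DD.
lra.
Qed.

Theorem lemma3 (N M m : nat) (ns : 'I_N -> nat) (src dst : 'I_M -> 'I_N)
  (Om : forall i : 'I_N, ('I_(ns i) -> R) -> Prop)
  (A : forall i : 'I_N, 'I_m -> 'I_(ns i) -> R) (b : 'I_N -> 'I_m -> R)
  (f : 'I_N -> (Idx N ns -> R) -> R)
  (g : forall i : 'I_N, (Idx N ns -> R) -> 'I_(ns i) -> R)
  (chi : R) :
  simple_connected_graph N M src dst ->
  is_partial_gradient_C1 N ns f g ->
  Assumption1 N m ns Om A b f ->
  0 < chi -> Assumption4 N ns g chi ->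
  maximally_monotone (dotW N M m ns) (subW N M m ns) (Abar N M m ns Om A src dst) /\
  (forall beta, 0 < beta < beta_bound chi (dstar N M src dst) ->
     cocoercive (dotW N M m ns) (subW N M m ns) beta (Bbar N M m ns b src dst g)).
Proof.
move=> _ _ [HOm _] Hchi HA4.
have Hcl : forall i, is_closed (@Om i) by move=> i; case: (HOm i).
have Hcv : forall i, is_convex (@Om i) by move=> i; case: (HOm i) => _ [].
have Hne : forall i, exists x, Om i x.
  move=> i; case: (HOm i) => _ [_ [x [eps [He H]]]]; exists x; apply: H => c.
  by rewrite Rminus_eq_0 Rabs_R0.
split; first exact: (Abar_maximal N M m ns src dst Om A Hcl Hcv Hne).
move=> beta Hb; exact: (Bbar_coco N M m ns src dst b g chi beta Hchi HA4 Hb).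
Qed.
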